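(* Let $\mathcal H$ be a complex Hilbert space and $k\ge 3$. If a nonzero continuous symmetric $k$-linear form $T$ on $\mathcal H$ attains its norm at $(\mathbf{x}_1,\ldots,\mathbf{x}_k)$, where $\mathbf{x}_1,\ldots,\mathbf{x}_k$ are norm one vectors, then $\dim(\operatorname{span}\{\mathbf{x}_1,\ldots,\mathbf{x}_k\})=1$.
   Context: $k$-linear means $\mathbb C$-multilinear. $\|T\|=\sup\{|T(\mathbf{w}_1,\ldots,\mathbf{w}_k)|:\|\mathbf{w}_i\|\le1\}$, and $T$ attains its norm at $(\mathbf{x}_1,\ldots,\mathbf{x}_k)$ if $|T(\mathbf{x}_1,\ldots,\mathbf{x}_k)|=\|T\|$. *)

(* Defs.v *)
From HB Require Import structures.
From mathcomp Require Import all_boot all_order all_algebra all_fingroup.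
From mathcomp Require Import complex.
From mathcomp Require Import boolp classical_sets reals.

Set Implicit Arguments.
Unset Strict Implicit.
Unset Printing Implicit Defensive.

Import Order.TTheory GRing.Theory Num.Theory.
Local Open Scope ring_scope.
Local Open Scope classical_set_scope.

Definition cmod (R : realType) (z : R[i]) : R := Normc.normc z.

Definition ipnorm (R : realType) (V : lmodType R[i]) (ip : V -> V -> R[i])
  (x : V) : R := Num.sqrt (complex.Re (ip x x)).

Record is_hilbert (R : realType) (V : lmodType R[i]) (ip : V -> V -> R[i]) :
  Prop := IsHilbert {
  ip_linear : forall (a : R[i]) (x y z : V), ip (a *: x + y) z = a * ip x z + ip y z;
  ip_conj : forall x y : V, ip y x = conjc (ip x y);
  ip_pos : forall x : V, 0 <= complex.Re (ip x x);
  ip_definite : forall x : V, ip x x = 0 -> x = 0;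
  ip_complete : forall u : nat -> V,
    (forall e : R, 0 < e -> exists N : nat, forall m n : nat,
        (N <= m)%N -> (N <= n)%N -> ipnorm ip (u m - u n) < e) ->
    exists l : V, forall e : R, 0 < e -> exists N : nat, forall n : nat,
        (N <= n)%N -> ipnorm ip (u n - l) < e
}.

Definition upd (V : Type) (k : nat) (w : 'I_k -> V) (i : 'I_k) (v : V) :
  'I_k -> V := fun j => if j == i then v else w j.

Definition multilinear (R : realType) (V : lmodType R[i]) (k : nat)
  (T : ('I_k -> V) -> R[i]) : Prop :=
  forall (w : 'I_k -> V) (i : 'I_k) (a : R[i]) (x y : V),
    T (upd w i (a *: x + y)) = a * T (upd w i x) + T (upd w i y).

Definition sym_kform (V : Type) (C : Type) (k : nat)
  (T : ('I_k -> V) -> C) : Prop :=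
  forall (s : 'S_k) (w : 'I_k -> V), T (fun j => w (s j)) = T w.

Definition continuous_form (R : realType) (V : lmodType R[i])
  (ip : V -> V -> R[i]) (k : nat) (T : ('I_k -> V) -> R[i]) : Prop :=
  forall (x : 'I_k -> V) (e : R), 0 < e -> exists d : R, 0 < d /\
    forall y : 'I_k -> V, (forall i, ipnorm ip (y i - x i) < d) ->
      cmod (T y - T x) < e.

Definition form_norm (R : realType) (V : lmodType R[i])
  (ip : V -> V -> R[i]) (k : nat) (T : ('I_k -> V) -> R[i]) : R :=
  sup [set r : R | exists w : 'I_k -> V,
         (forall i, ipnorm ip (w i) <= 1) /\ r = cmod (T w)].

Definition attains_norm_at (R : realType) (V : lmodType R[i])
  (ip : V -> V -> R[i]) (k : nat) (T : ('I_k -> V) -> R[i])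
  (x : 'I_k -> V) : Prop :=
  cmod (T x) = form_norm ip T.

Definition span_of (R : realType) (V : lmodType R[i]) (k : nat)
  (x : 'I_k -> V) : set V :=
  [set v | exists c : 'I_k -> R[i], v = \sum_(i < k) c i *: x i].

Definition dim_one (R : realType) (V : lmodType R[i]) (S : set V) : Prop :=
  exists v : V, v != 0 /\ S = [set a *: v | a in [set: R[i]]].

(* Main.v *)
Require Import Defs.
From HB Require Import structures.
From mathcomp Require Import all_boot all_order all_algebra all_fingroup.
From mathcomp Require Import complex.
From mathcomp Require Import boolp classical_sets reals.
From mathcomp Require Import ring lra zify.
Import Order.TTheory GRing.Theory Num.Theory.
Local Open Scope ring_scope.
Local Open Scope complex_scope.
Set Implicit Arguments.
Unset Strict Implicit.
Unset Printing Implicit Defensive.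

Section CFacts.
Variable R : realType.
Implicit Types (z w : R[i]).

Lemma normC_cmod z : `|z| = (cmod z)%:C.
Proof. by case: z. Qed.

Lemma cmodM z w : cmod (z * w) = cmod z * cmod w.
Proof. exact: Normc.normcM. Qed.

Lemma cmod_ge0 z : 0 <= cmod z.
Proof. by rewrite -ler0c -normC_cmod normr_ge0. Qed.

Lemma cmod_sq z : z * (conjc z) = ((cmod z) ^+ 2)%:C.
Proof. by rewrite -sqr_normc normC_cmod rmorphXn. Qed.

Lemma cmod_real (r : R) : 0 <= r -> cmod (r%:C) = r.
Proof. by move=> h; rewrite /cmod /= expr0n /= addr0 sqrtr_sqr ger0_norm. Qed.

Lemma cmodJ z : cmod (conjc z) = cmod z.
Proof. by case: z => a b; rewrite /cmod /= sqrrN. Qed.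

Lemma cmod_eq0 z : cmod z = 0 -> z = 0.
Proof. exact: Normc.eq0_normc. Qed.

Lemma cmod0 : cmod (0 : R[i]) = 0.
Proof. exact: Normc.normc0. Qed.

Lemma cmod_unit z : z * (conjc z) = 1 -> cmod z = 1.
Proof.
rewrite cmod_sq => /complexI h.
have h0 := cmod_ge0 z.
have : (cmod z - 1) * (cmod z + 1) = 0 by rewrite -subr_sqr h expr1n subrr.
move/eqP; rewrite mulf_eq0 => /orP[/eqP|/eqP]; first by move/eqP; rewrite subr_eq0 => /eqP.
move=> h1; lra.
Qed.

Lemma cjD z w : (conjc (z + w)) = (conjc z) + (conjc w).
Proof. by case: z => a b; case: w => c d; apply/eqP; rewrite eq_complex /=; apply/andP; split; apply/eqP; ring. Qed.

Lemma cjM z w : (conjc (z * w)) = (conjc z) * (conjc w).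
Proof. by case: z => a b; case: w => c d; apply/eqP; rewrite eq_complex /=; apply/andP; split; apply/eqP; ring. Qed.

Lemma cjN z : (conjc (- z)) = - (conjc z).
Proof. by case: z => a b; apply/eqP; rewrite eq_complex /=; apply/andP; split; apply/eqP; ring. Qed.

Lemma cjK z : (conjc ((conjc z))) = z.
Proof. by case: z => a b; apply/eqP; rewrite eq_complex /=; apply/andP; split; apply/eqP; ring. Qed.

Lemma cjR (r : R) : (conjc (r%:C)) = r%:C.
Proof. by apply/eqP; rewrite eq_complex /=; apply/andP; split; apply/eqP; ring. Qed.

Lemma cj0 : (conjc (0 : R[i])) = 0.
Proof. exact: (cjR 0). Qed.

Lemma cj1 : (conjc (1 : R[i])) = 1.
Proof. exact: (cjR 1). Qed.

Lemma ii_unit : 'i * (conjc ('i)) = 1 :> R[i].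
Proof. by apply/eqP; rewrite eq_complex /=; apply/andP; split; apply/eqP; ring. Qed.

Lemma ii_sq : ('i) ^+ 2 = -1 :> R[i].
Proof. exact: sqr_i. Qed.

End CFacts.

Section IP.
Variables (R : realType) (V : lmodType R[i]) (ip : V -> V -> R[i]).
Hypothesis H : is_hilbert ip.

Definition nn (v : V) : R := complex.Re (ip v v).

Lemma ipC x y : ip y x = (conjc (ip x y)).
Proof. exact: (ip_conj H x y). Qed.

Lemma ipDl x y z : ip (x + y) z = ip x z + ip y z.
Proof. by have := ip_linear H 1 x y z; rewrite scale1r mul1r. Qed.

Lemma ip0l z : ip 0 z = 0.
Proof. by apply: (addrI (ip 0 z)); rewrite addr0 -ipDl addr0. Qed.

Lemma ipZl a x z : ip (a *: x) z = a * ip x z.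
Proof. by have := ip_linear H a x 0 z; rewrite addr0 ip0l addr0. Qed.

Lemma ipNl x z : ip (- x) z = - ip x z.
Proof. by rewrite -scaleN1r ipZl mulN1r. Qed.

Lemma ipBl x y z : ip (x - y) z = ip x z - ip y z.
Proof. by rewrite ipDl ipNl. Qed.

Lemma ipDr x y z : ip x (y + z) = ip x y + ip x z.
Proof. by rewrite (ipC (y + z) x) ipDl cjD -!ipC. Qed.

Lemma ipZr a x y : ip x (a *: y) = (conjc a) * ip x y.
Proof. by rewrite (ipC (a *: y) x) ipZl cjM -ipC. Qed.

Lemma ipNr x y : ip x (- y) = - ip x y.
Proof. by rewrite -scaleN1r ipZr cjN cj1 mulN1r. Qed.

Lemma ipBr x y z : ip x (y - z) = ip x y - ip x z.
Proof. by rewrite ipDr ipNr. Qed.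

Lemma ip_real v : ip v v = (nn v)%:C.
Proof.
rewrite /nn; have := ipC v v; case: (ip v v) => a b /= [] hb.
by congr Complex; lra.
Qed.

Lemma nn_ge0 v : 0 <= nn v.
Proof. exact: (ip_pos H v). Qed.

Lemma nn0 v : nn v = 0 -> v = 0.
Proof. by move=> h; apply: (ip_definite H); rewrite ip_real h. Qed.

Lemma ip1 v : nn v = 1 -> ip v v = 1.
Proof. by move=> h; rewrite ip_real h. Qed.

Lemma nnZ a v : nn (a *: v) = (cmod a) ^+ 2 * nn v.
Proof. by rewrite /nn ipZl ipZr mulrA cmod_sq ip_real -rmorphM. Qed.

Lemma ipnormE v : ipnorm ip v = Num.sqrt (nn v).
Proof. by []. Qed.

Lemma ipnormZ a v : ipnorm ip (a *: v) = cmod a * ipnorm ip v.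
Proof.
by rewrite !ipnormE nnZ sqrtrM ?sqr_ge0 // sqrtr_sqr ger0_norm // cmod_ge0.
Qed.

Lemma nn1_neq0 v : nn v = 1 -> v != 0.
Proof. by move=> h; apply/eqP => v0; move: h; rewrite v0 /nn ip0l /= => /eqP; rewrite eq_sym oner_eq0. Qed.

End IP.

Section Core.
Variables (R : realType) (V : lmodType R[i]) (ip : V -> V -> R[i]).
Hypothesis H : is_hilbert ip.
Variables (F : V -> V -> V -> R[i]) (M : R).
Hypothesis M_gt0 : 0 < M.
Hypothesis Flin : forall al a a' b c, F (al *: a + a') b c = al * F a b c + F a' b c.
Hypothesis F12 : forall a b c, F a b c = F b a c.
Hypothesis F23 : forall a b c, F a b c = F a c b.
Hypothesis Fbnd : forall u b c, nn ip b = 1 -> nn ip c = 1 ->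
  cmod (F u b c) <= M * ipnorm ip u.

Definition maxi a b c :=
  [/\ nn ip a = 1, nn ip b = 1, nn ip c = 1 & cmod (F a b c) = M].

Lemma FD a a' b c : F (a + a') b c = F a b c + F a' b c.
Proof. by have := Flin 1 a a' b c; rewrite scale1r mul1r. Qed.

Lemma F0 b c : F 0 b c = 0.
Proof. by apply: (addrI (F 0 b c)); rewrite addr0 -FD addr0. Qed.

Lemma FZ al a b c : F (al *: a) b c = al * F a b c.
Proof. by have := Flin al a 0 b c; rewrite addr0 F0 addr0. Qed.

Lemma FD2 a b b' c : F a (b + b') c = F a b c + F a b' c.
Proof. by rewrite F12 FD -!(F12 a). Qed.

Lemma FZ2 al a b c : F a (al *: b) c = al * F a b c.
Proof. by rewrite F12 FZ -(F12 a). Qed.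

Lemma maxi12 a b c : maxi a b c -> maxi b a c.
Proof. by case=> *; split => //; rewrite F12. Qed.

Lemma maxi23 a b c : maxi a b c -> maxi a c b.
Proof. by case=> *; split => //; rewrite F23. Qed.

Lemma maxi_neq0 a b c : maxi a b c -> F a b c != 0.
Proof.
case=> _ _ _ hM; apply/eqP => h0; move: hM; rewrite h0 cmod0 => h.
by move: M_gt0; rewrite -h ltxx.
Qed.

Lemma riesz a b c : maxi a b c -> forall u, F u b c = F a b c * ip u a.
Proof.
case=> na nb nc hM u.
set al := F a b c.
set z := u - ip u a *: a.
have hza : ip z a = 0 by rewrite /z (ipBl H) (ipZl H) (ip1 H) // mulr1 subrr.
have hu : u = ip u a *: a + z by rewrite /z addrC subrK.
suff hz : F z b c = 0 by rewrite {1}hu Flin hz addr0 mulrC.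
clearbody z.
apply/eqP/negPn/negP => hb.
set be := F z b c.
set q := cmod be ^+ 2.
have q_gt0 : 0 < q.
  rewrite /q exprn_gt0 // lt_def cmod_ge0 andbT; apply/negP => /eqP/cmod_eq0 h.
  by move: hb; rewrite -/be h eqxx.
set Nz := nn ip z.
have Nz_ge0 : 0 <= Nz by exact: nn_ge0.
set P := M ^+ 2 * Nz.
have P_ge0 : 0 <= P by rewrite /P mulr_ge0 // sqr_ge0.
set ep := (P + 1)^-1.
have ep_gt0 : 0 < ep by rewrite /ep invr_gt0; lra.
have epP : ep * P = 1 - ep.
  have h : ep * (P + 1) = 1 by rewrite /ep mulVf //; apply/eqP => h; lra.
  lra.
set t := ep%:C * al * conjc be.
have h1 : F (t *: z + a) b c = al * (1 + ep * q)%:C.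
  rewrite Flin -/be /t -!mulrA [conjc be * be]mulrC cmod_sq -/q.
  have -> : (1 + ep * q)%:C = 1 + ep%:C * q%:C :> R[i] by rewrite rmorphD rmorphM rmorph1.
  rewrite -/al; ring.
have ht : t * conjc t = ((ep * M * Num.sqrt q) ^+ 2)%:C.
  rewrite cmod_sq /t !cmodM cmod_real; last by lra.
  by rewrite /q sqrtr_sqr ger0_norm ?cmod_ge0 // hM cmodJ.
have h2 : nn ip (t *: z + a) = 1 + (ep * q) * (ep * P).
  rewrite /nn !(ipDl H, ipZl H, ipDr H, ipZr H) hza (ipC H z a) hza.
  rewrite (ip1 H na) (ip_real H z) -/Nz cj0 mulr0 add0r addr0 (mulrA t) ht.
  rewrite -rmorphM -[X in _ + X](rmorph1 (real_complex R)) -rmorphD /=.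
  rewrite exprMn sqr_sqrtr; last by lra.
  rewrite /P; ring.
have h3 := Fbnd (t *: z + a) nb nc.
have epq0 : 0 <= ep * q by apply: mulr_ge0; lra.
move: h3; rewrite h1 cmodM hM cmod_real; last by lra.
rewrite ipnormE h2 ler_pM2l // => h3.
have h4 : (1 + ep * q) * (1 + ep * q) <= 1 + ep * q * (ep * P).
  have hs : 0 <= 1 + ep * q * (ep * P).
    by rewrite addr_ge0 // mulr_ge0 // mulr_ge0 //; lra.
  rewrite -[X in _ <= X](sqr_sqrtr hs) expr2.
  by apply: ler_pM => //; lra.
move: h4; rewrite epP.
set s := ep * q.
have s_gt0 : 0 < s by rewrite /s mulr_gt0.
move=> h4.
have : 0 < s * ep by rewrite mulr_gt0.
nra.
Qed.



Lemma riesz3 a b c : maxi a b c -> forall u, F a b u = F a b c * ip u c.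
Proof.
move=> hm u; have hm' : maxi c a b by apply: maxi12; apply: maxi23.
rewrite F23 F12 (riesz hm') F12 F23 //.
Qed.

Lemma phase a b c la : maxi a b c -> la * conjc la = 1 ->
  maxi (la *: a) b c /\ F (la *: a) b c = la * F a b c.
Proof.
case=> na nb nc hM hl; have hF := FZ la a b c.
split => //; split => //.
  by rewrite (nnZ H) (cmod_unit hl) expr1n mul1r.
by rewrite hF cmodM (cmod_unit hl) mul1r.
Qed.

Lemma pair a b c : maxi a b c -> a + b != 0 ->
  exists m : R, [/\ m%:C * m%:C * ip (a + b) (a + b) = 1,
     maxi (m%:C *: (a + b)) (m%:C *: (a + b)) c &
     F (m%:C *: (a + b)) (m%:C *: (a + b)) c = F a b c].
Proof.
move=> hm hs; have [na nb nc hM] := hm.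
set s := a + b.
set al := F a b c.
have Fss : F s s c = al * ip s s.
  rewrite /s FD !FD2 (riesz (maxi12 hm) a) (riesz hm b) -(F12 a b c) -/al.
  rewrite !(ipDl H, ipDr H) (ip1 H na) (ip1 H nb); ring.
set N := nn ip s.
have N_gt0 : 0 < N.
  rewrite lt_def (nn_ge0 H) andbT; apply/eqP => h0.
  by move: hs; rewrite -/s (nn0 H h0) eqxx.
set n := Num.sqrt N.
have n_gt0 : 0 < n by rewrite sqrtr_gt0.
have hnN : n ^+ 2 = N by rewrite sqr_sqrtr // ltW.
have n0 : n != 0 by rewrite gt_eqF.
exists n^-1.
have hm1 : (n^-1)%:C * (n^-1)%:C * ip s s = 1.
  rewrite (ip_real H) -!rmorphM /= -/N -hnN.
  have -> : n^-1 / n * n ^+ 2 = 1 by field.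
  by [].
have hF : F ((n^-1)%:C *: s) ((n^-1)%:C *: s) c = al.
  rewrite FZ FZ2 Fss.
  transitivity (al * ((n^-1)%:C * (n^-1)%:C * ip s s)); first ring.
  by rewrite hm1 mulr1.
have hy : nn ip ((n^-1)%:C *: s) = 1.
  transitivity (cmod ((n^-1)%:C) ^+ 2 * nn ip s); first exact: (nnZ H).
  rewrite cmod_real; last by rewrite invr_ge0 ltW.
  by rewrite -/N -hnN -exprMn (mulVf n0) expr1n.
split => //; split => //.
by rewrite hF.
Qed.



Lemma alg_rel (la L X G Y r rc IP : R[i]) : la * L = 1 ->
  IP = la * (L * 1 + r) + (L * rc + 1) ->
  la * (la * X + Y) + (la * Y + G) = IP * (la * Y) ->
  la ^+ 2 * X + G = (la ^+ 2 * r + rc) * Y.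
Proof.
move=> hl -> e; apply/eqP; rewrite -subr_eq0.
have -> : la ^+ 2 * X + G - (la ^+ 2 * r + rc) * Y =
  (la * (la * X + Y) + (la * Y + G) - (la * (L * 1 + r) + (L * rc + 1)) * (la * Y))
  + (la * L - 1) * (la * Y + rc * Y) by ring.
by rewrite e hl !subrr mul0r addr0.
Qed.

Lemma rel_eq a b c la u : maxi a b c -> la * conjc la = 1 -> la *: a + b != 0 ->
  la ^+ 2 * F a a u + F b b u =
  (la ^+ 2 * ip a b + conjc (ip a b)) * (F a b c * ip u c).
Proof.
move=> hm hl hs; have [na nb nc hM] := hm.
have [hm' hF'] := phase hm hl.
have [m [hm1 hmy hFy]] := pair hm' hs.
set s := la *: a + b.
have h1 := riesz3 hmy u.
rewrite hFy hF' in h1.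
have e : F (m%:C *: s) (m%:C *: s) u = m%:C * m%:C * F s s u by rewrite FZ FZ2 mulrA.
have h2 : F s s u = ip s s * (la * (F a b c * ip u c)).
  rewrite [la * (_ * _)]mulrA -h1 e.
  transitivity ((m%:C * m%:C * ip s s) * F s s u); first by rewrite hm1 mul1r.
  ring.
apply: (alg_rel (IP := ip s s) hl _ _).
  rewrite /s !(ipDl H, ipZl H, ipDr H, ipZr H) (ip1 H na) (ip1 H nb) -(ipC H).
  reflexivity.
rewrite -h2 /s FD FZ !FD2 !FZ2 -(F12 a b u) (riesz3 hm u).
by [].
Qed.

Lemma two_choice a b la : nn ip a = 1 -> la * conjc la = 1 ->
  (la *: a + b != 0) \/ ((- la) *: a + b != 0).
Proof.
move=> na hl.
case: (eqVneq (la *: a + b) 0) => h1; last by left.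
right; apply/negP => /eqP h2.
have : (la + la) *: a = 0.
  have -> : (la + la) *: a = (la *: a + b) - ((- la) *: a + b).
    by rewrite scalerDl scaleNr opprD opprK addrACA subrr addr0.
  by rewrite h1 h2 subrr.
move/eqP; rewrite scaler_eq0 => /orP[|]; last by move: (nn1_neq0 H na) => /negP.
rewrite -mulr2n mulrn_eq0 /= => /eqP l0.
by move: hl; rewrite l0 mul0r => /eqP; rewrite eq_sym oner_eq0.
Qed.

Lemma relation a b c u : maxi a b c ->
  F a a u = F a b c * ip a b * ip u c.
Proof.
move=> hm; have [na nb nc hM] := hm.
have hN (la : R[i]) : la * conjc la = 1 -> (- la) * conjc (- la) = 1.
  by move=> hl; rewrite cjN mulrNN.
have [la1 [hl1 hs1 hq1]] : exists la1 : R[i],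
    [/\ la1 * conjc la1 = 1, la1 *: a + b != 0 & la1 ^+ 2 = 1].
  have h11 : 1 * conjc (1 : R[i]) = 1 by rewrite cj1 mulr1.
  case: (two_choice b na h11) => h; first by exists 1; rewrite expr1n.
  by exists (-1); rewrite ?hN // sqrrN expr1n.
have [la2 [hl2 hs2 hq2]] : exists la2 : R[i],
    [/\ la2 * conjc la2 = 1, la2 *: a + b != 0 & la2 ^+ 2 = -1].
  case: (two_choice b na (ii_unit R)) => h; first by exists 'i; rewrite ?ii_unit ?ii_sq.
  by exists (- 'i); rewrite ?hN ?ii_unit // sqrrN ii_sq.
have E1 := rel_eq u hm hl1 hs1.
have E2 := rel_eq u hm hl2 hs2.
rewrite hq1 !mul1r in E1.
rewrite hq2 !mulN1r in E2.
have h2 : 2%:R * F a a u = 2%:R * (ip a b * (F a b c * ip u c)).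
  transitivity ((F a a u + F b b u) - (- F a a u + F b b u)); first ring.
  rewrite E1 E2; ring.
have n2 : (2%:R : R[i]) != 0 by rewrite pnatr_eq0.
rewrite (mulfI n2 h2); ring.
Qed.



Lemma core_par a b c : maxi a b c -> a = ip a b *: b.
Proof.
move=> hm; have [na nb nc hM] := hm.
have al0 := maxi_neq0 hm.
case: (eqVneq (a + b) 0) => hs.
  have hb : b = - a by apply/eqP; rewrite -addr_eq0 addrC hs.
  by rewrite hb (ipNr H) (ip1 H na) scaleN1r opprK.
have [m [hm1 hmy hFy]] := pair hm hs.
set y := m%:C *: (a + b).
have hyc : maxi y c y := maxi23 hmy.
have e1 := relation c hyc.
have ne : F y y c != 0 := maxi_neq0 hmy.
rewrite -(F23 y y c) in e1.
have hyc1 : ip y c * conjc (ip y c) = 1.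
  rewrite -(ipC H y c); apply: (mulfI ne); by rewrite mulr1 mulrA -e1.
set r := ip a b.
set p := ip a c.
set q := ip b c.
have hba : ip b a = conjc r := ipC H a b.
have hp : p = r * q.
  have e := relation b hm.
  rewrite (F23 a a b) (riesz3 hm a) -mulrA in e.
  exact: (mulfI al0 e).
have hq : q = conjc r * p.
  have e := relation a (maxi12 hm).
  rewrite (F23 b b a) (riesz3 (maxi12 hm) b) -mulrA hba in e.
  exact: (mulfI (maxi_neq0 (maxi12 hm)) e).
have hyc2 : ip y c = m%:C * (p + q) by rewrite /y (ipZl H) (ipDl H).
have hpq : (p + q) * conjc (p + q) = ip (a + b) (a + b).
  have hmm : m%:C * m%:C != 0 :> R[i].
    by apply/eqP => h; move: hm1; rewrite h mul0r => /eqP; rewrite eq_sym oner_eq0.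
  apply: (mulfI hmm); rewrite hm1 -hyc1 hyc2 cjM cjR; ring.
have hr : r * conjc r = 1.
  case: (eqVneq p 0) => p0.
    have q0 : q = 0 by rewrite hq p0 mulr0.
    move: hpq; rewrite p0 q0 addr0 mul0r => /esym h0.
    by move: hs; rewrite (ip_definite H h0) eqxx.
  apply: (mulfI p0); rewrite mulr1.
  transitivity (r * (conjc r * p)); first ring.
  by rewrite -hq -hp.
apply/eqP; rewrite -subr_eq0; apply/eqP; apply: (ip_definite H).
rewrite !(ipBl H, ipBr H, ipZl H, ipZr H) (ip1 H na) (ip1 H nb) -/r hba.
transitivity (1 - r * conjc r); first ring.
by rewrite hr subrr.
Qed.

End Core.

Section Outer.
Variables (R : realType) (V : lmodType R[i]) (ip : V -> V -> R[i]).
Hypothesis H : is_hilbert ip.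
Variables (k : nat) (T : ('I_k -> V) -> R[i]).
Hypothesis mult : multilinear T.
Hypothesis symT : sym_kform T.
Hypothesis contT : continuous_form ip T.

Lemma upd_id (w : 'I_k -> V) i : upd w i (w i) = w.
Proof. by apply: funext => m; rewrite /upd; case: eqP => // ->. Qed.

Lemma upd_upd (w : 'I_k -> V) i u v : upd (upd w i u) i v = upd w i v.
Proof. by apply: funext => m; rewrite /upd; case: eqP. Qed.

Lemma T_updD w i u v : T (upd w i (u + v)) = T (upd w i u) + T (upd w i v).
Proof. by have := mult w i 1 u v; rewrite scale1r mul1r. Qed.

Lemma T_upd0 w i : T (upd w i 0) = 0.
Proof. by apply: (addrI (T (upd w i 0))); rewrite addr0 -T_updD addr0. Qed.

Lemma T_updZ w i a u : T (upd w i (a *: u)) = a * T (upd w i u).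
Proof. by have := mult w i a u 0; rewrite addr0 T_upd0 addr0. Qed.

Lemma T_slot0 w i : w i = 0 -> T w = 0.
Proof. by move=> h; rewrite -(upd_id w i) h T_upd0. Qed.

Lemma scale_all (c : R[i]) w : T (fun m => c *: w m) = c ^+ k * T w.
Proof.
suff P : forall n, (n <= k)%N ->
    T (fun m : 'I_k => if (m < n)%N then c *: w m else w m) = c ^+ n * T w.
  by rewrite -P //; congr T; apply: funext => m; rewrite ltn_ord.
elim=> [|n IH] hn.
  by rewrite expr0 mul1r; congr T; apply: funext => m.
have hnk : (n < k)%N by [].
set i : 'I_k := Ordinal hnk.
set g := fun m : 'I_k => if (m < n)%N then c *: w m else w m.
have -> : (fun m : 'I_k => if (m < n.+1)%N then c *: w m else w m) = upd g i (c *: w i).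
  apply: funext => m; rewrite /upd /g.
  case: eqP => [->|hm] /=; first by rewrite ltnSn.
  have : (val m != n) by apply/eqP => h; apply: hm; apply: val_inj.
  by rewrite ltnS leq_eqVlt => /negbTE ->.
have gi : g i = w i by rewrite /g ltnn.
have IH' : T g = c ^+ n * T w := IH (ltnW hn).
by rewrite T_updZ -gi upd_id IH' exprS mulrA.
Qed.

Definition Sset := ([set r : R | exists w : 'I_k -> V,
         (forall i, ipnorm ip (w i) <= 1) /\ r = cmod (T w)])%classic.

Lemma ipnorm0 : ipnorm ip 0 = 0.
Proof. by rewrite ipnormE /nn (ip0l H) /= sqrtr0. Qed.

Lemma ipnorm_ge0 v : 0 <= ipnorm ip v.
Proof. exact: sqrtr_ge0. Qed.

Hypothesis k_gt0 : (0 < k)%N.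

Lemma T0 : T (fun _ => 0) = 0.
Proof. exact: (@T_slot0 _ (Ordinal k_gt0)). Qed.

Lemma T_bounded : exists K : R, forall w : 'I_k -> V,
  (forall i, ipnorm ip (w i) <= 1) -> cmod (T w) <= K.
Proof.
have [d [d_gt0 hd]] := contT (fun _ => 0) ltr01.
set h := d / 2.
have h_gt0 : 0 < h by rewrite /h divr_gt0.
have hk_gt0 : 0 < h ^+ k by rewrite exprn_gt0.
exists (h ^+ k)^-1 => w hw.
have hy : forall i, ipnorm ip (h%:C *: w i - 0) < d.
  move=> i; rewrite subr0 ipnormZ // cmod_real; last exact: ltW.
  have h1 := hw i; have h0 := ipnorm_ge0 (w i).
  apply: (le_lt_trans (y := h)); last by rewrite /h; lra.
  by rewrite -[X in _ <= X]mulr1 ler_pM2l.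
have h1 := hd _ hy.
rewrite T0 subr0 scale_all cmodM in h1.
have e : cmod ((h%:C) ^+ k) = h ^+ k by rewrite -rmorphXn cmod_real // ltW.
rewrite e in h1.
by rewrite -(ler_pM2l hk_gt0) mulfV ?gt_eqF //; exact: ltW.
Qed.

Lemma has_supS : has_sup Sset.
Proof.
split.
  exists 0, (fun _ => 0); split; first by move=> i; rewrite ipnorm0 ler01.
  by rewrite T0 cmod0.
have [K hK] := T_bounded; exists K => r [w [hw ->]]; exact: hK.
Qed.

Notation M := (form_norm ip T).

Lemma bnd0 w : (forall i, ipnorm ip (w i) <= 1) -> cmod (T w) <= M.
Proof. by move=> hw; apply: (sup_upper_bound has_supS); exists w. Qed.

Lemma M_ge0 : 0 <= M.
Proof.
have := bnd0 (w := fun _ => 0); rewrite T0 cmod0; apply => i; by rewrite ipnorm0 ler01.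
Qed.

Lemma bnd1 w i u : (forall m, m != i -> ipnorm ip (w m) <= 1) ->
  cmod (T (upd w i u)) <= M * ipnorm ip u.
Proof.
move=> hw.
case: (eqVneq (nn ip u) 0) => hu.
  rewrite (nn0 H hu) T_upd0 cmod0 ipnorm0 mulr0 //.
set n := ipnorm ip u.
have n_gt0 : 0 < n.
  rewrite /n ipnormE sqrtr_gt0 lt_def hu /=; exact: nn_ge0.
have e : T (upd w i u) = n%:C * T (upd w i ((n^-1)%:C *: u)).
  rewrite T_updZ mulrA -rmorphM mulfV ?gt_eqF // mul1r //.
rewrite e cmodM cmod_real; last exact: ltW.
rewrite [M * _]mulrC ler_pM2l //.
apply: bnd0 => m; rewrite /upd; case: eqP => [_|/eqP hm]; last exact: hw.
rewrite ipnormZ // cmod_real; last by rewrite invr_ge0 ltW.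
by rewrite mulVf ?gt_eqF.
Qed.

Lemma M_gt0 : (exists w : 'I_k -> V, T w != 0) -> 0 < M.
Proof.
move=> [w0 hw0].
have Q : forall d, (d <= k)%N -> exists w : 'I_k -> V, T w != 0 /\
    forall m : 'I_k, (k - d <= m)%N -> ipnorm ip (w m) <= 1.
  elim=> [|d IH] hd.
    by exists w0; split => // m; rewrite subn0 leqNgt ltn_ord.
  have [w [hw hb]] := IH (ltnW hd).
  have hn : (k - d.+1 < k)%N by rewrite ltn_subrL k_gt0.
  set i : 'I_k := Ordinal hn.
  have wi0 : nn ip (w i) != 0.
    by apply/eqP => h; move: hw; rewrite (T_slot0 (i := i) (nn0 H h)) eqxx.
  set nu := ipnorm ip (w i).
  have nu_gt0 : 0 < nu by rewrite /nu ipnormE sqrtr_gt0 lt_def wi0 /=; exact: nn_ge0.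
  exists (upd w i ((nu^-1)%:C *: w i)); split.
    rewrite T_updZ upd_id mulf_neq0 //.
    apply/eqP => /complexI h; move: nu_gt0; rewrite -invr_gt0 h ltxx //.
  move=> m hm; rewrite /upd; case: eqP => [_|/eqP him].
    rewrite ipnormZ // cmod_real; last by rewrite invr_ge0 ltW.
    by rewrite mulVf ?gt_eqF.
  apply: hb.
  have : val m != val i by rewrite (inj_eq val_inj).
  move: hm; rewrite /=; lia.
have [w [hw hb]] := Q k (leqnn k).
apply: (lt_le_trans _ (bnd0 (w := w) _)).
  rewrite lt_def cmod_ge0 andbT; apply/eqP => h; move: hw.
  by rewrite (cmod_eq0 h) eqxx.
by move=> m; apply: hb; rewrite subnn.
Qed.

End Outer.

Local Close Scope complex_scope.

Theorem proposition3p1 (R : realType) (V : lmodType R[i])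
  (ip : V -> V -> R[i]) (k : nat) (T : ('I_k -> V) -> R[i])
  (x : 'I_k -> V) :
  is_hilbert ip ->
  (3 <= k)%N ->
  multilinear T ->
  sym_kform T ->
  continuous_form ip T ->
  (exists w : 'I_k -> V, T w != 0) ->
  (forall i, ipnorm ip (x i) = 1) ->
  attains_norm_at ip T x ->
  dim_one (span_of x).
Proof.
move=> H hk mult symT contT hex hx hatt.
have k_gt0 : (0 < k)%N by apply: leq_trans hk.
set M := form_norm ip T.
have M_pos : 0 < M := M_gt0 H mult contT k_gt0 hex.
have nx : forall i, nn ip (x i) = 1.
  move=> i; have := hx i; rewrite ipnormE => h.
  by rewrite -(sqr_sqrtr (nn_ge0 H (x i))) h expr1n.
have par : forall i j : 'I_k, x i = ip (x i) (x j) *: x j.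
  move=> i j; case: (eqVneq i j) => [->|hij]; first by rewrite (ip1 H (nx j)) scale1r.
  have [ln [hlk hli hlj]] : exists ln, [/\ (ln < k)%N, ln != val i & ln != val j].
    have hij' : val i != val j by rewrite (inj_eq val_inj).
    case E0 : ((val i != 0%N) && (val j != 0%N)).
      by exists 0%N; move/andP: E0 => [h1 h2]; split => //; rewrite eq_sym.
    case E1 : ((val i != 1%N) && (val j != 1%N)).
      by exists 1%N; move/andP: E1 => [h1 h2]; split => //; [lia | rewrite eq_sym ..].
    exists 2%N; split => //; move: E0 E1 hij' => /negbT E0 /negbT E1 hij'; lia.
  set l : 'I_k := Ordinal hlk.
  have hli' : l != i by rewrite -(inj_eq val_inj).
  have hlj' : l != j by rewrite -(inj_eq val_inj).
  pose G a b c := fun m : 'I_k =>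
    if m == i then a else if m == j then b else if m == l then c else x m.
  pose F a b c := T (G a b c).
  have Gupd : forall a b c, G a b c = upd (G 0 b c) i a.
    by move=> a b c; apply: funext => m; rewrite /G /upd; case: (m == i).
  have hFe : forall a b c, F a b c = T (upd (G 0 b c) i a).
    by move=> a b c; rewrite /F -Gupd.
  have hji : (j == i) = false by apply/negbTE; rewrite eq_sym.
  have hil : (i == l) = false by apply/negbTE; rewrite eq_sym.
  have hjl : (j == l) = false by apply/negbTE; rewrite eq_sym.
  have Flin : forall al a a' b c, F (al *: a + a') b c = al * F a b c + F a' b c.
    by move=> al a a' b c; rewrite !hFe; exact: mult.
  have F12 : forall a b c, F a b c = F b a c.
    move=> a b c; rewrite /F -(symT (tperm i j) (G b a c)); congr T.
    apply: funext => m; rewrite /G.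
    case: (eqVneq m i) => [->|hmi]; first by rewrite tpermL hji eqxx.
    case: (eqVneq m j) => [->|hmj]; first by rewrite tpermR eqxx.
    rewrite tpermD 1?eq_sym //.
    by rewrite (negbTE hmi) (negbTE hmj).
  have F23 : forall a b c, F a b c = F a c b.
    move=> a b c; rewrite /F -(symT (tperm j l) (G a c b)); congr T.
    apply: funext => m; rewrite /G.
    case: (eqVneq m j) => [->|hmj]; first by rewrite tpermL ?hji ?eqxx ?(negbTE hli') ?(negbTE hlj').
    case: (eqVneq m l) => [->|hml]; first by rewrite tpermR ?hji ?eqxx ?(negbTE hli') ?(negbTE hlj').
    rewrite tpermD 1?eq_sym //.
    by rewrite (negbTE hmj) (negbTE hml).
  have Fbnd : forall u b c, nn ip b = 1 -> nn ip c = 1 ->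
      cmod (F u b c) <= M * ipnorm ip u.
    move=> u b c nb nc; rewrite hFe; apply: (bnd1 H mult contT k_gt0) => m hm.
    rewrite /G (negbTE hm).
    case: ifP => _; first by rewrite ipnormE nb sqrtr1.
    case: ifP => _; first by rewrite ipnormE nc sqrtr1.
    by rewrite hx.
  have hGx : G (x i) (x j) (x l) = x.
    apply: funext => m; rewrite /G.
    by case: eqP => [->|_] //; case: eqP => [->|_] //; case: eqP => [->|_].
  have hmax : maxi ip F M (x i) (x j) (x l).
    by split => //; rewrite /F hGx.
  exact: (core_par H M_pos Flin F12 F23 Fbnd hmax).
set i0 : 'I_k := Ordinal k_gt0.
exists (x i0); split; first exact: (nn1_neq0 H (nx i0)).
apply/seteqP; split => z.
  move=> [c ->]; exists (\sum_(i < k) c i * ip (x i) (x i0)) => //.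
  rewrite scaler_suml; apply: eq_bigr => i _.
  by rewrite -scalerA -par.
move=> [a _ <-]; exists (fun i => if i == i0 then a else 0).
rewrite (bigD1 i0) //= ?eqxx big1 ?addr0 // => i hi.
by rewrite (negbTE hi) scale0r.
Qed.
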